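(* Let $X,Y$ be Banach spaces over $\mathbb{K}\in\{\mathbb{R},\mathbb{C}\}$ and let $G\in L(X,Y)$ with $\|G\|=1$. Then for every $T\in L(X,Y)$, \[ \|T\|_G=\max\{|\lambda|:\lambda\in S_G(T)\}=\max\{\lambda:\lambda\in \widetilde{S}_G(T)\}, \] where \[ S_G(T):=\bigcap_{\delta>0}\overline{\{y^*(Tx): x\in S_X,\ y^*\in S_{Y^*},\ \|Gx\|>1-\delta\}},\qquad \widetilde{S}_G(T):=\bigcap_{\delta>0}\overline{\{\|Tx\|: x\in S_X,\ \|Gx\|>1-\delta\}}. \]
   Context: $S_X$ denotes the unit sphere of $X$, $Y^*$ the dual of $Y$, and $L(X,Y)$ the space of bounded linear operators with the operator norm. For $G\in L(X,Y)$ with $\|G\|=1$ and $T\in L(X,Y)$, the $G$-(semi)norm is $\|T\|_G := \inf_{\delta>0}\sup\{\|Tx\|: x\in S_X,\ \|Gx\|>1-\delta\}$. *)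

(* Defs.v *)
From HB Require Import structures.
From mathcomp Require Import all_boot all_order all_algebra.
From mathcomp Require Import all_classical all_reals all_analysis.
From mathcomp.real_closed Require Export complex.
Import Order.TTheory GRing.Theory Num.Theory.
Import numFieldNormedType.Exports.
Local Open Scope classical_set_scope.
Local Open Scope ring_scope.

Set Implicit Arguments.
Unset Strict Implicit.
Unset Printing Implicit Defensive.

Section GNorm.
Variable K : numFieldType.

Definition opnorm (X Y : normedModType K) (f : X -> Y) : K :=
  supremum 0 [set `|f x| | x in [set x : X | `|x| <= 1]].

Variables X Y : normedModType K.

Definition Gnorm (G T : X -> Y) : K :=
  infimum 0
    [set supremum 0 [set `|T x| | x in [set x : X | `|x| = 1 /\ 1 - d < `|G x|]]
    | d in [set d : K | 0 < d]].

Definition SG (G T : X -> Y) : set K :=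
  \bigcap_(d in [set d : K | 0 < d])
    closure [set z : K | exists (x : X) (ys : {linear Y -> K^o}),
               [/\ continuous ys, opnorm ys = 1, `|x| = 1,
                   1 - d < `|G x| & z = ys (T x)]].

Definition SGt (G T : X -> Y) : set K :=
  \bigcap_(d in [set d : K | 0 < d])
    closure [set `|T x| | x in [set x : X | `|x| = 1 /\ 1 - d < `|G x|]].

End GNorm.

Definition is_max (K : numFieldType) (A : set K) (m : K) : Prop :=
  A m /\ forall a, A a -> a <= m.

(* Main.v *)
Require Import Defs.
From HB Require Import structures.
From mathcomp Require Import all_boot all_order all_algebra.
From mathcomp Require Import all_classical all_reals all_analysis.
From mathcomp.real_closed Require Import complex.
From mathcomp Require Import lra ring.
Import Order.TTheory GRing.Theory Num.Theory.
Import numFieldNormedType.Exports.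
Local Open Scope classical_set_scope.
Local Open Scope ring_scope.


Section HBreal.
Variables (R : realType) (V : lmodType R) (p : V -> R).
Hypothesis pD : forall u v, p (u + v) <= p u + p v.
Hypothesis pZ : forall a v, p (a *: v) = `|a| * p v.
Variable y0 : V.

Let p0 : p 0 = 0.
Proof. by rewrite -(scale0r (0:V)) pZ normr0 mul0r. Qed.
Let pN v : p (- v) = p v.
Proof. by rewrite -scaleN1r pZ normrN normr1 mul1r. Qed.
Let pge0 v : 0 <= p v.
Proof. by have := pD v (-v); rewrite subrr p0 pN => h; lra. Qed.

Definition good (g : set (V * R)) :=
  [/\ (forall x r s, g (x, r) -> g (x, s) -> r = s),
      (forall x r y s, g (x, r) -> g (y, s) -> g (x + y, r + s)),
      (forall x r a, g (x, r) -> g (a *: x, a * r)),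
      (forall x r, g (x, r) -> r <= p x) &
      (forall x r, g (x, r) -> g (y0, p y0))].

Let chain_good (F : set (set (V * R))) : F `<=` good -> total_on F subset ->
  good (\bigcup_(X in F) X).
Proof.
move=> Fg tot; split.
- move=> x r s [g1 F1 g1r] [g2 F2 g2s].
  have [h|h] := tot _ _ F1 F2.
  + by case: (Fg _ F2) => Hf _ _ _ _; apply: (Hf x) => //; apply: h.
  + by case: (Fg _ F1) => Hf _ _ _ _; apply: (Hf x) => //; apply: h.
- move=> x r y s [g1 F1 g1r] [g2 F2 g2s].
  have [h|h] := tot _ _ F1 F2.
  + by exists g2 => //; case: (Fg _ F2) => _ Ha _ _ _; apply: Ha => //; apply: h.
  + by exists g1 => //; case: (Fg _ F1) => _ Ha _ _ _; apply: Ha => //; apply: h.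
- move=> x r a [g1 F1 g1r]; exists g1 => //.
  by case: (Fg _ F1) => _ _ Hz _ _; apply: Hz.
- by move=> x r [g1 F1 g1r]; case: (Fg _ F1) => _ _ _ Hd _; apply: Hd g1r.
- move=> x r [g1 F1 g1r]; exists g1 => //.
  by case: (Fg _ F1) => _ _ _ _ Hb; apply: Hb g1r.
Qed.

Let base := [set xr : V * R | exists t : R, xr = (t *: y0, t * p y0)].

Let base_good : good base.
Proof.
split.
- move=> x r s [t [-> ->]] [u [e ->]].
  have [->//|tu] := eqVneq t u.
  have : (t - u) *: y0 = 0 by rewrite scalerBl e subrr.
  move/eqP; rewrite scaler_eq0 subr_eq0 (negbTE tu) /= => /eqP ->.
  by rewrite p0 !mulr0.
- move=> x r y s [t [-> ->]] [u [-> ->]]; exists (t + u).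
  by rewrite scalerDl mulrDl.
- move=> x r a [t [-> ->]]; exists (a * t); by rewrite scalerA mulrA.
- move=> x r [t [-> ->]]; rewrite pZ; apply: ler_wpM2r => //; exact: ler_norm.
- by move=> x r _; exists 1; rewrite scale1r mul1r.
Qed.

Let extend (A : set (V * R)) (z : V) : good A -> A (y0, p y0) ->
  (forall r, ~ A (z, r)) -> exists B, A `<` B /\ good B.
Proof.
move=> [Af Aa Az Ad Ab] Ay0 Nz.
have A00 : A (0, 0) by have := Az _ _ 0 Ay0; rewrite scale0r mul0r.
pose L := [set u | exists x r, A (x, r) /\ u = r - p (x - z)].
have Lub : forall y s, A (y, s) -> ubound L (p (y + z) - s).
  move=> y s Ays _ [x [r [Axr ->]]].
  have h1 := Ad _ _ (Aa _ _ _ _ Axr Ays).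
  have h2 := pD (x - z) (y + z).
  have e : x - z + (y + z) = x + y by rewrite addrCA subrK addrC.
  rewrite e in h2; lra.
have L0 : L !=set0 by exists (0 - p (0 - z)); exists 0, 0.
have hsL : has_sup L by split => //; exists (p (0 + z) - 0); exact: Lub.
pose c := sup L.
have cle : forall y s, A (y, s) -> c <= p (y + z) - s.
  by move=> y s Ays; apply: ge_sup => //; exact: Lub.
have cge : forall x r, A (x, r) -> r - p (x - z) <= c.
  by move=> x r Axr; apply: sup_upper_bound => //; exists x, r.
pose B := [set xr : V * R | exists x r t, A (x, r) /\ xr = (x + t *: z, r + t * c)].
have AB : A `<=` B.
  by move=> [x r] Axr; exists x, r, 0; rewrite scale0r mul0r !addr0.
exists B; split.
  split => // BA; have : B (z, c) by exists 0, 0, 1; rewrite scale1r mul1r !add0r.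
  by move/BA; apply: Nz.
split.
- move=> x r s [x1 [r1 [t1 [A1 [-> ->]]]]] [x2 [r2 [t2 [A2 [e ->]]]]].
  have [tt|tt] := eqVneq t1 t2.
    rewrite tt in e *; move/addIr : e => e; rewrite e in A1.
    by rewrite (Af _ _ _ A1 A2).
  exfalso; apply: (Nz ((t1 - t2)^-1 * (r2 - r1))).
  have hz : z = (t1 - t2)^-1 *: (x2 - x1).
    apply/(@scalerI _ _ (t1 - t2)); first by rewrite subr_eq0.
    rewrite scalerA mulfV ?subr_eq0 // scale1r scalerBl.
    have e' : x2 = x1 + t1 *: z - t2 *: z by rewrite e addrK.
    by rewrite e' addrAC [x1 + _]addrC addrK.
  rewrite hz; apply: (Az).
  have := Aa _ _ _ _ A2 (Az _ _ (-1) A1).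
  by rewrite scaleN1r mulN1r.
- move=> x r y s [x1 [r1 [t1 [A1 [-> ->]]]]] [x2 [r2 [t2 [A2 [-> ->]]]]].
  exists (x1 + x2), (r1 + r2), (t1 + t2); split; first exact: Aa.
  by rewrite scalerDl mulrDl addrACA [r1 + _ + _]addrACA.
- move=> x r a [x1 [r1 [t1 [A1 [-> ->]]]]].
  exists (a *: x1), (a * r1), (a * t1); split; first exact: Az.
  by rewrite scalerDr mulrDr scalerA mulrA.
- move=> x r [x1 [r1 [t1 [A1 [e1 e2]]]]]; case: e1 => -> ; case: e2 => ->.
  have [t0|t0|->] := ltgtP t1 0; last by rewrite scale0r mul0r !addr0; exact: Ad.
  + pose u := - t1; have u0 : 0 < u by rewrite /u oppr_gt0.
    have Ay := Az _ _ u^-1 A1.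
    have := cge _ _ Ay.
    have e : p (x1 + t1 *: z) = u * p (u^-1 *: x1 - z).
      rewrite -[X in X * _](gtr0_norm u0) -pZ scalerBr scalerA mulfV ?gt_eqF //.
      by rewrite scale1r /u scaleNr opprK.
    rewrite e => h.
    have h' := ler_wpM2l (ltW u0) h.
    rewrite mulrBr mulrA mulfV ?gt_eqF // mul1r in h'.
    rewrite /u in h' *; lra.
  + have Ay := Az _ _ t1^-1 A1.
    have := cle _ _ Ay.
    have e : p (x1 + t1 *: z) = t1 * p (t1^-1 *: x1 + z).
      rewrite -[X in X * _](gtr0_norm t0) -pZ scalerDr scalerA mulfV ?gt_eqF //.
      by rewrite scale1r.
    rewrite e => h.
    have h' := ler_wpM2l (ltW t0) h.
    rewrite mulrBr mulrA mulfV ?gt_eqF // mul1r in h'.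
    lra.
- by move=> x r _; apply: AB.
Qed.

Lemma HB_real : exists f : V -> R,
  [/\ (forall x y, f (x + y) = f x + f y), (forall a x, f (a *: x) = a * f x),
      f y0 = p y0 & forall x, f x <= p x].
Proof.
have [A [gA maxA]] := Zorn_bigcup chain_good.
have Ay0 : A (y0, p y0).
  have [Ane|A0] := pselect (A !=set0).
    case: Ane => -[x r] Axr.
    by case: gA => _ _ _ _ Hb; exact: Hb Axr.
  exfalso; apply: (maxA base _ base_good).
  split; first by move=> xr Axr; exfalso; apply: A0; exists xr.
  move=> /(_ (1 *: y0, 1 * p y0)) h; apply: A0; exists (1 *: y0, 1 * p y0).
  by apply: h; exists 1.
have tot : forall z, exists r, A (z, r).
  move=> z; apply: contrapT => Nz.
  have [B [AB gB]] := @extend A z gA Ay0 (fun r h => Nz (ex_intro _ r h)).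
  exact: maxA AB gB.
pose f z := projT1 (cid (tot z)).
have fA z : A (z, f z) by rewrite /f; case: cid.
have [Af Aa Az Ad Ab] := gA.
exists f; split.
- by move=> x y; apply: (Af (x + y)) => //; apply: Aa.
- by move=> a x; apply: (Af (a *: x)) => //; apply: Az.
- by apply: (Af y0).
- by move=> x; apply: Ad.
Qed.

End HBreal.

Set Implicit Arguments.
Unset Strict Implicit.
Unset Printing Implicit Defensive.

Section Generic.
Variable K : numFieldType.

Lemma closureP (A : set K) p : closure A p <-> forall e, 0 < e -> exists a, A a /\ `|p - a| < e.
Proof.
split.
- move=> cl e e0; have [|a [Aa ba]] := cl (ball p e); first exact: nbhsx_ballx.
  by exists a; split; [| move: ba; rewrite -ball_normE].
- move=> H B /nbhs_ballP [e e0 sB]; have [a [Aa pa]] := H e e0.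
  by exists a; split; [|apply: sB; rewrite -ball_normE].
Qed.

Lemma supremums_eq (A : set K) s x0 : A !=set0 -> supremums A s -> supremum x0 A = s.
Proof.
move=> /set0P A0 sA; rewrite /supremum (negbTE A0).
by apply: xget_subset1 sA _; exact: is_subset1_supremums.
Qed.

Lemma infimums_eq (A : set K) s x0 : A !=set0 -> infimums A s -> infimum x0 A = s.
Proof.
move=> /set0P A0 sA; rewrite /infimum (negbTE A0).
by apply: xget_subset1 sA _; exact: is_subset1_infimums.
Qed.

Lemma supremum_ne0 (A : set K) s : supremum 0 A = s -> s != 0 -> supremums A s.
Proof.
rewrite /supremum; case: ifP => [_ <-|_]; first by rewrite eqxx.
by case: xgetP => [x -> Px <-//|_ <-]; rewrite eqxx.
Qed.

Lemma norm_small (w : K) : (forall e, 0 < e -> `|w| < e) -> w = 0.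
Proof.
move=> h; apply/eqP/negPn/negP => w0.
by have := h `|w|; rewrite normr_gt0 w0 ltxx => /(_ isT).
Qed.

Lemma real_le_eps (x s : K) : x \is Num.real -> s \is Num.real ->
  (forall e, 0 < e -> x < s + e) -> x <= s.
Proof.
move=> xr sr h; rewrite real_leNgt //; apply/negP => sx.
have := h (x - s); rewrite subr_gt0 => /(_ sx).
by rewrite addrC subrK ltxx.
Qed.

Lemma closure_norm_le (A : set K) s a : s \is Num.real ->
  (forall n, A n -> `|n| <= s) -> closure A a -> `|a| <= s.
Proof.
move=> sr As /closureP cl; apply: real_le_eps => // e e0.
have [n [An an]] := cl e e0.
have h1 : `|a| <= `|n| + `|a - n|.
  by rewrite -[a in X in X <= _](subrK n a) addrC ler_normD.
apply: (le_lt_trans h1); apply: ler_ltD => //; exact: As.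
Qed.

Lemma closure_ge0 (A : set K) a :
  (forall n, A n -> 0 <= n) -> closure A a -> 0 <= a.
Proof.
move=> A0 /closureP cl.
suff -> : a = `|a| by [].
apply/eqP; rewrite -subr_eq0; apply/eqP/norm_small => e e0.
have [n [An an]] := cl (e / 2) (divr_gt0 e0 (ltr0Sn _ 1)).
have nn : `|n| = n by apply: ger0_norm; exact: A0.
have h1 : `|a - Num.norm a| <= `|a - n| + `|Num.norm n - Num.norm a|.
  by rewrite -{1}nn ler_distD.
have h2 : `|Num.norm n - Num.norm a| <= `|n - a| := ler_dist_dist _ _.
rewrite (distrC n a) in h2.
apply: (le_lt_trans h1); rewrite (splitr e); apply: ltr_leD => //.
exact: le_trans h2 (ltW an).
Qed.


Definition HSprop := forall A : set K, A !=set0 ->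
  (exists b, forall a, A a -> 0 <= a /\ a <= b) -> exists s, supremums A s.
Definition HBprop := forall (Y : normedModType K) (y : Y), y != 0 ->
  exists F : {linear Y -> K^o}, F y = `|y| /\ forall x, `|F x| <= `|x|.

Lemma inf_ex (HS : HSprop) (E : set K) : E !=set0 -> (forall e, E e -> 0 <= e) ->
  exists i, infimums E i.
Proof.
move=> [e0 Ee0] Ege0.
pose L := [set l | 0 <= l /\ lbound E l].
have L0 : L !=set0 by exists 0; split => // e Ee; exact: Ege0.
have Lb : exists b, forall a, L a -> 0 <= a /\ a <= b.
  by exists e0 => l [l0 lb]; split => //; exact: lb Ee0.
have [s [sub sl]] := HS _ L0 Lb.
have s0 : 0 <= s by apply: sub; split => // e Ee; exact: Ege0.
exists s; split.
- by move=> e Ee; apply: sl => l [_ lb]; exact: lb.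
- move=> l lb.
  have lr : l \is Num.real.
    by rewrite (ler_real (lb _ Ee0)) ger0_real // Ege0.
  have [l0|l0] := real_leP (real0 K) lr.
    by apply: sub; split.
  exact: le_trans (ltW l0) s0.
Qed.

Lemma opnorm1_le (Y : normedModType K) (F : {linear Y -> K^o}) :
  opnorm F = 1 -> forall y, `|F y| <= `|y|.
Proof.
move=> /supremum_ne0 /(_ (oner_neq0 _)) [ub _] y.
have [->|y0] := eqVneq y 0; first by rewrite linear0 !normr0.
have ny : 0 < `|y| by rewrite normr_gt0.
pose u := `|y|^-1 *: y.
have nu : `|u| = 1 by rewrite normrZ normfV normr_id mulVf // gt_eqF.
have Fu : `|F u| <= 1 by apply: ub; exists u => //=; rewrite nu.
have -> : y = `|y| *: u by rewrite /u scalerA mulfV ?gt_eqF // scale1r.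
rewrite linearZ /= normrZ normr_id.
by rewrite normrZ normr_id nu ler_pM2l.
Qed.

Lemma functional_ok (Y : normedModType K) (F : {linear Y -> K^o}) (y : Y) :
  y != 0 -> F y = `|y| -> (forall x, `|F x| <= `|x|) ->
  continuous F /\ opnorm F = 1.
Proof.
move=> y0 Fy Fb; split.
  apply: bounded_linear_continuous; apply/bounded_funP => r.
  by exists r => x xr; exact: le_trans (Fb x) xr.
have ny : 0 < `|y| by rewrite normr_gt0.
pose u := `|y|^-1 *: y.
have nu : `|u| = 1 by rewrite normrZ normfV normr_id mulVf // gt_eqF.
have Fu : F u = 1 by rewrite linearZ /= Fy; apply: mulVf; rewrite gt_eqF.
apply: supremums_eq; first by exists `|F u|, u => //=; rewrite nu.
split.
- by move=> _ [x x1 <-]; exact: le_trans (Fb x) x1.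
- move=> b ub; rewrite -(normr1 K) -Fu; apply: ub.
  by exists u => //=; rewrite nu.
Qed.

End Generic.

Section MainGen.
Variable K : numFieldType.
Hypothesis HS : HSprop K.
Hypothesis HB : HBprop K.
Variables X Y : normedModType K.
Variables G T : {linear X -> Y}.
Hypothesis cG : continuous G.
Hypothesis cT : continuous T.
Hypothesis nG : opnorm G = 1.

Let Sd (d : K) := [set x : X | `|x| = 1 /\ 1 - d < `|G x|].
Let Nd (d : K) := [set `|T x| | x in Sd d].
Let sd (d : K) := supremum 0 (Nd d).
Let E := [set sd d | d in [set d : K | 0 < d]].

Let supG : supremums [set `|G x| | x in [set x : X | `|x| <= 1]] 1.
Proof. exact: supremum_ne0 nG (oner_neq0 _). Qed.

Let Sd_mono d1 d2 : d1 <= d2 -> Sd d1 `<=` Sd d2.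
Proof. by move=> d12 x [x1 h]; split => //; apply: le_lt_trans h; exact: lerB. Qed.

Let Sd_ne d : 0 < d -> Sd d !=set0.
Proof.
move=> d0.
have key : forall d, 0 < d -> d <= 1 -> Sd d !=set0.
  move=> {}d {}d0 d1; apply: contrapT => hne.
  have ub : ubound [set `|G x| | x in [set x : X | `|x| <= 1]] (1 - d).
    move=> _ [x x1 <-].
    have dr : 1 - d \is Num.real by rewrite rpredB // ?real1 // gtr0_real.
    rewrite real_leNgt ?normr_real //; apply/negP => hlt.
    have Gx0 : 0 < `|G x| by apply: le_lt_trans hlt; rewrite subr_ge0.
    have x0 : x != 0.
      by apply/negP => /eqP ex; move: Gx0; rewrite ex linear0 normr0 ltxx.
    have nx : 0 < `|x| by rewrite normr_gt0.
    apply: hne; exists (`|x|^-1 *: x); split.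
      by rewrite normrZ normfV normr_id mulVf // gt_eqF.
    rewrite linearZ /= normrZ normfV normr_id.
    apply: (lt_le_trans hlt).
    rewrite -[X in X <= _]mul1r ler_wpM2r // invf_ge1 //.
  have := (proj2 supG) _ ub.
  by rewrite -subr_ge0 addrAC subrr add0r oppr_ge0 => /(lt_le_trans d0); rewrite ltxx.
have [d1|d1] := real_leP (gtr0_real d0) (real1 K); first exact: key.
have [x Sx] := key 1 ltr01 (lexx _).
by exists x; apply: (Sd_mono (ltW d1)).
Qed.


Let Tbd : exists M, forall x, `|x| <= 1 -> `|T x| <= M.
Proof. exact: (bounded_funP T).2 ((linear_bounded_continuous T).2 cT) 1. Qed.

Let sdP d : 0 < d -> supremums (Nd d) (sd d).
Proof.
move=> d0; have [M HM] := Tbd.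
have Ne : Nd d !=set0 by have [x Sx] := Sd_ne d0; exists `|T x|, x.
have Nb : exists b, forall a, Nd d a -> 0 <= a /\ a <= b.
  by exists M => _ [x [x1 _] <-]; split => //; apply: HM; rewrite x1.
have [s hs] := HS Ne Nb.
by rewrite /sd (supremums_eq _ Ne hs).
Qed.

Let Nd_ge0 d n : Nd d n -> 0 <= n.
Proof. by move=> [x _ <-]. Qed.

Let sd_ge0 d : 0 < d -> 0 <= sd d.
Proof.
move=> d0; have [x Sx] := Sd_ne d0.
by apply: le_trans (normr_ge0 (T x)) _; apply: (proj1 (sdP d0)); exists x.
Qed.

Let sd_mono d1 d2 : 0 < d1 -> d1 <= d2 -> sd d1 <= sd d2.
Proof.
move=> d10 d12; have d20 := lt_le_trans d10 d12.
apply: (proj2 (sdP d10)) => _ [x Sx <-].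
by apply: (proj1 (sdP d20)); exists x => //; exact: Sd_mono Sx.
Qed.

Let sd_approx d e : 0 < d -> 0 < e -> exists2 x, Sd d x & sd d - e < `|T x|.
Proof.
move=> d0 e0; apply: contrapT => hne.
have ub : ubound (Nd d) (sd d - e).
  move=> _ [x Sx <-].
  have sr : sd d \is Num.real := ger0_real (sd_ge0 d0).
  rewrite real_leNgt ?normr_real ?rpredB ?(gtr0_real e0) //.
  by apply/negP => h; apply: hne; exists x.
have := (proj2 (sdP d0)) _ ub.
by rewrite -subr_ge0 addrAC subrr add0r oppr_ge0 => /(lt_le_trans e0); rewrite ltxx.
Qed.

Let Ene : E !=set0.
Proof. by exists (sd 1), 1 => //; exact: ltr01. Qed.

Let E_ge0 e : E e -> 0 <= e.
Proof. by move=> [d d0 <-]; exact: sd_ge0. Qed.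

Let gP : infimums E (Gnorm G T).
Proof.
have [i hi] := inf_ex HS Ene E_ge0.
by rewrite /Gnorm -/(Sd _) (infimums_eq _ Ene hi).
Qed.


Let g := Gnorm G T.

Let g_ge0 : 0 <= g.
Proof. by apply: (proj2 gP) => e Ee; exact: E_ge0. Qed.

Let g_le d : 0 < d -> g <= sd d.
Proof. by move=> d0; apply: (proj1 gP); exists d. Qed.

Let g_approx e : 0 < e -> exists2 d, 0 < d & sd d < g + e.
Proof.
move=> e0; apply: contrapT => hne.
have lb : lbound E (g + e).
  move=> _ [d d0 <-].
  have sr : sd d \is Num.real := ger0_real (sd_ge0 d0).
  rewrite real_leNgt ?rpredD ?(gtr0_real e0) ?(ger0_real g_ge0) //.
  by apply/negP => h; apply: hne; exists d.
have := (proj2 gP) _ lb.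
by rewrite -subr_ge0 opprD addrA subrr add0r oppr_ge0 => /(lt_le_trans e0); rewrite ltxx.
Qed.

Let SGt_in : SGt G T g.
Proof.
move=> d d0 /=; apply/closureP => e e0.
have key : forall d1, 0 < d1 -> d1 <= d -> sd d1 < g + e ->
    exists a, Nd d a /\ `|g - a| < e.
  move=> d1 d10 d1d hd1.
  have [x Sx hx] := sd_approx d10 e0.
  exists `|T x|; split; first by exists x => //; exact: Sd_mono Sx.
  have Tx : `|T x| <= sd d1 by apply: (proj1 (sdP d10)); exists x.
  rewrite real_ltr_distl ?rpredB ?normr_real ?(ger0_real g_ge0) //.
  apply/andP; split.
    by rewrite ltrBlDr; exact: le_lt_trans Tx hd1.
  by apply: le_lt_trans (g_le d10) _; rewrite -ltrBlDr.
have [d' d'0 hd'] := g_approx e0.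
have [dd|dd] := real_leP (gtr0_real d'0) (gtr0_real d0).
  exact: key d'0 dd hd'.
apply: (key d d0 (lexx _)).
exact: le_lt_trans (sd_mono d0 (ltW dd)) hd'.
Qed.

Let SGt_max a : SGt G T a -> a <= g.
Proof.
move=> Sa.
have a0 : 0 <= a.
  by apply: (closure_ge0 (A := Nd 1)); [exact: Nd_ge0 | exact: Sa ltr01].
apply: (proj2 gP) => _ [d d0 <-].
rewrite -(ger0_norm a0); apply: (closure_norm_le (A := Nd d)).
- exact: ger0_real (sd_ge0 d0).
- move=> n Nn; rewrite ger0_norm; last exact: Nd_ge0 Nn.
  by apply: (proj1 (sdP d0)).
- exact: Sa.
Qed.


Let y1_ex : exists y1 : Y, y1 != 0.
Proof.
have [x [_ hx]] := Sd_ne ltr01.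
exists (G x); rewrite -normr_gt0; apply: le_lt_trans hx.
by rewrite subrr.
Qed.

Let SGt_sub : SGt G T `<=` SG G T.
Proof.
move=> a Sa d d0; apply: closureS (Sa d d0).
move=> _ [x [x1 hx] <-].
have [y1 y10] := y1_ex.
have [Tx0|Tx0] := eqVneq (T x) 0.
  have [F [Fy Fb]] := HB y10.
  have [cF nF] := functional_ok y10 Fy Fb.
  by exists x, F; split => //; rewrite Tx0 linear0 normr0.
have [F [Fy Fb]] := HB Tx0.
have [cF nF] := functional_ok Tx0 Fy Fb.
by exists x, F; split => //; rewrite Fy.
Qed.

Let SG_max l : SG G T l -> `|l| <= g.
Proof.
move=> Sl; apply: (proj2 gP) => _ [d d0 <-].
apply: (closure_norm_le (ger0_real (sd_ge0 d0)) _ (Sl d d0)).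
move=> _ [x [F [cF nF x1 hx ->]]].
  apply: le_trans (opnorm1_le nF (T x)) _.
  by apply: (proj1 (sdP d0)); exists x.
Qed.

Theorem main_gen : is_max [set `|l| | l in SG G T] (Gnorm G T) /\
  is_max (SGt G T) (Gnorm G T).
Proof.
split; split.
- by exists g; [exact: SGt_sub SGt_in | exact: ger0_norm g_ge0].
- by move=> _ [l Sl <-]; exact: SG_max.
- exact: SGt_in.
- exact: SGt_max.
Qed.

End MainGen.

Lemma HS_real (R : realType) : HSprop R.
Proof.
move=> A A0 [b Ab].
have hs : has_sup A by split => //; exists b => a /Ab [].
exists (sup A); split; first exact: sup_upper_bound.
by move=> u ub; exact: ge_sup.
Qed.

Lemma HB_realP (R : realType) : HBprop R.
Proof.
move=> Y y y0.
have [f [fD fZ fy fle]] := @HB_real R Y (fun v => `|v|) (@ler_normD _ Y) (@normrZ _ Y) y.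
have lf : linear_for *:%R f by move=> a u v; rewrite fD fZ.
pose F : {linear Y -> R^o} := HB.pack_for {linear Y -> R^o} f (GRing.isLinear.Build R Y R^o *:%R f lf).
exists F; split => //= x.
rewrite ler_norml fle andbT lerNl.
have := fle (- x); rewrite -scaleN1r fZ normrZ normrN normr1 !mul1r mulN1r.
done.
Qed.

From mathcomp.real_closed Require Import complex.
Local Open Scope complex_scope.

Definition realify (R : realType) (Y : lmodType R[i]) : Type := Y.
HB.instance Definition _ (R : realType) (Y : lmodType R[i]) :=
  GRing.Zmodule.on (realify Y).

Section Realify.
Variables (R : realType) (Y : lmodType R[i]).
Let rsc (r : R) (y : realify Y) : realify Y := (r%:C *: (y : Y)).
Let rscA a b v : rsc a (rsc b v) = rsc (a * b) v.
Proof. by rewrite /rsc scalerA -rmorphM. Qed.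
Let rsc1 : left_id 1 rsc.
Proof. by move=> v; rewrite /rsc rmorph1 scale1r. Qed.
Let rscDr : right_distributive rsc +%R.
Proof. by move=> a u v; rewrite /rsc scalerDr. Qed.
Let rscDl v : {morph rsc^~ v: a b / a + b}.
Proof. by move=> a b; rewrite /rsc rmorphD scalerDl. Qed.
HB.instance Definition _ := GRing.Zmodule_isLmodule.Build R (realify Y) rscA rsc1 rscDr rscDl.
End Realify.

Lemma realify_scale (R : realType) (Y : lmodType R[i]) (r : R) (y : realify Y) :
  r *: y = (r%:C *: (y : Y) : Y).
Proof. by []. Qed.

Lemma HS_complex (R : realType) : HSprop R[i].
Proof.
move=> A A0 [b Ab].
pose A' := [set Re a | a in A].
have Ar a : A a -> a = (Re a)%:C.
  move=> Aa; have /ger0_Im Ia := proj1 (Ab a Aa).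
  by case: a Aa Ia => ra ia /= _ ->.
have hs : has_sup A'.
  split; first by case: A0 => a Aa; exists (Re a), a.
  exists (Re b) => _ [a Aa <-].
  by have := proj2 (Ab a Aa); rewrite lecE => /andP[].
exists (sup A')%:C; split.
- move=> a Aa; rewrite (Ar a Aa) lecR; apply: sup_upper_bound => //.
  by exists a.
- move=> u ub; case: A0 => a0 Aa0.
  have ua0 := ub a0 Aa0.
  have Iu : Im u = 0.
    move: ua0; rewrite (Ar a0 Aa0) lecE => /andP[/eqP -> _] //.
  have -> : u = (Re u)%:C by case: u {ub ua0} Iu => ru iu /= ->.
  rewrite lecR; apply: ge_sup; first by case: hs.
  move=> _ [a Aa <-]; have := ub a Aa.
  by rewrite lecE => /andP[].
Qed.
Section Cx.
Variables (R : realType) (Y : normedModType R[i]).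
Let p : realify Y -> R := fun v => Re `|(v : Y)|.
Lemma nrm_real (v : Y) : `|v| = (p v)%:C.
Proof.
rewrite /p; have := ger0_Im (normr_ge0 v).
by case: (`|v|) => a b /= ->.
Qed.
Lemma normC_real (r : R) : `|r%:C| = `|r|%:C.
Proof. by rewrite normc_def /= expr0n /= addr0 sqrtr_sqr. Qed.
Let pD (u v : realify Y) : p (u + v) <= p u + p v.
Proof.
have := ler_normD (u : Y) (v : Y).
by rewrite !nrm_real -rmorphD lecR.
Qed.
Let pZ (a : R) (v : realify Y) : p (a *: v) = `|a| * p v.
Proof.
rewrite realify_scale /p normrZ normC_real (nrm_real v) -rmorphM.
by [].
Qed.
Lemma ii : 'i%C * 'i%C = -1 :> R[i].
Proof. by rewrite -expr2 sqr_i. Qed.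

Lemma HB_complexP_aux (y : Y) : y != 0 ->
  exists F : {linear Y -> R[i]^o}, F y = `|y| /\ forall x, `|F x| <= `|x|.
Proof.
move=> y0.
have [f [fD fZ fy fle]] := @HB_real R (realify Y) p pD pZ y.
have fZr (r : R) (v : Y) : f (r%:C *: v) = r * f v by rewrite -fZ.
have fN (v : Y) : f (- v) = - f v.
  by rewrite -scaleN1r -(rmorph1 (real_complex R)) -rmorphN fZr mulN1r.
pose F (v : Y) : R[i] := (f v)%:C - 'i%C * (f ('i%C *: v))%:C.
have FD u v : F (u + v) = F u + F v.
  rewrite /F /= scalerDr !fD !rmorphD; ring.
have FZr (r : R) v : F (r%:C *: v) = r%:C * F v.
  rewrite /F /= (fZr r v) scalerA (mulrC 'i%C r%:C) -scalerA (fZr r ('i%C *: v)) !rmorphM; ring.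
have Fi v : F ('i%C *: v) = 'i%C * F v.
  rewrite /F /= scalerA ii scaleN1r fN rmorphN mulrBr mulrA ii; ring.
have FZ a v : F (a *: v) = a * F v.
  rewrite [a]complexE scalerDl FD (FZr (Re a) v) -scalerA Fi (FZr (Im a) v); ring.
have ReF v : Re (F v) = f v by rewrite /F /=; ring.
have ImF v : Im (F v) = - f ('i%C *: v) by rewrite /F /=; ring.
have Fn v : `|F v| = (Num.sqrt (f v ^+ 2 + f ('i%C *: v) ^+ 2))%:C.
  by rewrite normc_def ReF ImF sqrrN.
have Fnb v : Num.sqrt (f v ^+ 2 + f ('i%C *: v) ^+ 2) <= p v.
  set a := f v; set b := f ('i%C *: v); set n := Num.sqrt _.
  have n0 : 0 <= n by apply: sqrtr_ge0.
  have [n00|nn0] := eqVneq n 0.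
    by rewrite n00; have := normr_ge0 v; rewrite nrm_real ler0c.
  have np : 0 < n by rewrite lt_neqAle eq_sym nn0.
  have n2 : n ^+ 2 = a ^+ 2 + b ^+ 2 by rewrite sqr_sqrtr // addr_ge0 // sqr_ge0.
  pose c : R[i] := (a / n) +i* (b / n).
  have fc : f (c *: v) = n.
    rewrite [c]complexE (mulrC 'i%C) scalerDl -scalerA fD (fZr (Re c) v) (fZr (Im c) ('i%C *: v)) /=.
    rewrite -/a -/b; have -> : a / n * a + b / n * b = n ^+ 2 / n by rewrite n2; field.
    by rewrite expr2 mulfK.
  have nc : `|c| = 1.
    rewrite normc_def /=.
    have -> : (a / n) ^+ 2 + (b / n) ^+ 2 = 1.
      by rewrite !expr_div_n -mulrDl -n2 divff // expf_neq0.
    by rewrite sqrtr1 rmorph1.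
  have := fle (c *: v); rewrite fc /p.
  by rewrite normrZ nc mul1r.
have lF : linear_for *:%R F by move=> a u v; rewrite FD FZ.
pose FF : {linear Y -> R[i]^o} :=
  HB.pack_for {linear Y -> R[i]^o} F (GRing.isLinear.Build R[i] Y R[i]^o *:%R F lF).
exists FF; split => /=.
- have := Fnb y; rewrite fy.
  set a := p y; set b := f ('i%C *: y) => hn.
  have a0 : 0 <= a by have := normr_ge0 y; rewrite nrm_real ler0c.
  have n0 : 0 <= Num.sqrt (a ^+ 2 + b ^+ 2) by apply: sqrtr_ge0.
  have n2 := sqr_sqrtr (addr_ge0 (sqr_ge0 a) (sqr_ge0 b)).
  have b0 : b = 0.
    move: hn n0 n2; set n := Num.sqrt _ => hn n0 n2; nra.
  by rewrite /F /= -/b b0 fy -/a nrm_real rmorph0 mulr0 subr0.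
- move=> x; rewrite Fn (nrm_real x) lecR; exact: Fnb.
Qed.
End Cx.

Lemma HB_complexP (R : realType) : HBprop R[i].
Proof. by move=> Y y y0; exact: HB_complexP_aux. Qed.

Theorem proposition2p1 (R : realType) :
  (* real scalars K = R *)
  (forall (X Y : completeNormedModType R) (G T : {linear X -> Y}),
      continuous G -> continuous T -> opnorm G = 1 ->
      is_max [set `|l| | l in SG G T] (Gnorm G T) /\
      is_max (SGt G T) (Gnorm G T)) /\
  (* complex scalars K = R[i] *)
  (forall (X Y : completeNormedModType R[i]) (G T : {linear X -> Y}),
      continuous G -> continuous T -> opnorm G = 1 ->
      is_max [set `|l| | l in SG G T] (Gnorm G T) /\
      is_max (SGt G T) (Gnorm G T)).
Proof.
split=> X Y G T cG cT nG.
- exact: (main_gen (@HS_real R) (@HB_realP R) cT nG).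
- exact: (main_gen (@HS_complex R) (@HB_complexP R) cT nG).
Qed.
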